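(* Let $F\in\mathbb{R}[x,y,t,s]$ be square-free, with no factor depending only on $(t,s)$, and such that the leading coefficient of $F$ with respect to $y$ does not depend on $x$. Let $M(x,t,s)=\sqrt{D_y(F)}$ and $R(t,s)=D_x(M)$, and assume $R$ is not identically zero. Let $t_0\in\mathbb{R}$ be such that $t-t_0$ is not a factor of $R(t,s)$. Then: (i) $\mathrm{Res}_x(M,M_x)$ specializes well at $t=t_0$, i.e. $\mathrm{Res}_x(M,M_x)(t_0,s)=\mathrm{Res}_x\big(M(x,t_0,s),M_x(x,t_0,s)\big)$, where $M_x=\partial M/\partial x$; (ii) $M(x,t_0,s)$ is square-free as a polynomial in the variable $x$. The analogous statements hold for $s_0\in\mathbb{R}$ such that $s-s_0$ is not a factor of $R(t,s)$, with the specialization $s=s_0$.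
   Context: For a polynomial $G$ and a variable $w$, $D_w(G):=\mathrm{Res}_w(G,\partial G/\partial w)$, and $\sqrt{G}$ denotes the square-free part of $G$. By convention $M:=0$ if $\deg_y F=0$ and $R:=0$ if $\deg_x M=0$. *)

(* Defs.v *)
From HB Require Import structures.
From mathcomp Require Import all_boot all_order all_algebra.
From mathcomp Require Import reals.
Set Implicit Arguments. Unset Strict Implicit. Unset Printing Implicit Defensive.
Import Order.TTheory GRing.Theory Num.Theory.
Local Open Scope ring_scope.

(* Polynomial representation (nested univariate polynomials):
   R[s]                 = {poly R}
   R[t,s]               = {poly {poly R}}                 (outer var t)
   R[x,t,s]             = {poly {poly {poly R}}}          (outer var x)
   R[y,x,t,s]           = {poly {poly {poly {poly R}}}}   (outer var y) *)

Definition mdvd (A : comRingType) (a b : A) : Prop := exists c, b = a * c.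

(* square-free: every square factor is a unit (units of nested polynomial
   rings over a field = nonzero constants) *)
Definition sqfree (A : comUnitRingType) (g : A) : Prop :=
  forall q r : A, g = q * q * r -> q \is a GRing.unit.

(* M is a square-free part of G: M square-free, M | G, and G | M^k
   (i.e. M is the product of the distinct irreducible factors of G,
   up to a nonzero constant) *)
Definition sqpart (A : comUnitRingType) (G M : A) : Prop :=
  sqfree M /\ mdvd M G /\ exists k : nat, mdvd G (M ^+ k).

(* D_w(G) = Res_w(G, dG/dw) for the outermost variable w *)
Definition Dres (A : comNzRingType) (G : {poly A}) : A := resultant G G^`().

Definition sqfree_x (R : fieldType) (p : {poly {poly R}}) : Prop :=
  forall q r : {poly {poly R}}, p = q * q * r -> (size q <= 1)%N.

Definition spec_t (R : fieldType) (t0 : R) (P : {poly {poly R}}) : {poly R} :=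
  P.[t0%:P].
Definition spec_t3 (R : fieldType) (t0 : R) (M : {poly {poly {poly R}}})
  : {poly {poly R}} := map_poly (fun c : {poly {poly R}} => c.[t0%:P]) M.
Definition spec_s (R : fieldType) (s0 : R) (P : {poly {poly R}}) : {poly R} :=
  map_poly (fun c : {poly R} => c.[s0]) P.
Definition spec_s3 (R : fieldType) (s0 : R) (M : {poly {poly {poly R}}})
  : {poly {poly R}} := map_poly (fun c : {poly {poly R}} => spec_s s0 c) M.

(* Main.v *)
Require Import Defs.
From HB Require Import structures.
From mathcomp Require Import all_boot all_order all_algebra.
From mathcomp Require Import reals.
From mathcomp Require Import zify ring.
Import Order.TTheory GRing.Theory Num.Theory.
Local Open Scope ring_scope.

Section Aux.
Variable R : realType.

Lemma natB0 n : (n%:R == 0 :> {poly R}) = (n == 0)%N.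
Proof. by rewrite -polyC_natr polyC_eq0 pnatr_eq0. Qed.

Lemma natA0 n : (n%:R == 0 :> {poly {poly R}}) = (n == 0)%N.
Proof. by rewrite -polyC_natr polyC_eq0 natB0. Qed.

Lemma size_derivA (M : {poly {poly {poly R}}}) : size M^`() = (size M).-1.
Proof.
have [->|nz] := eqVneq M 0; first by rewrite deriv0 size_poly0.
have lt := lt_size_deriv nz.
apply/eqP; rewrite eqn_leq; apply/andP; split; first by rewrite -ltnS; case: (size M) lt.
case: (ltnP 1 (size M)) => [h|h]; last by case: (size M) h => [|[|]].
rewrite leqNgt; apply/negP => h2.
have : M^`()`_((size M).-2) = 0.
  by apply/(leq_sizeP _ _ _ _ (leqnn _)) => //; case: (size M) h h2 => [|[|m]] //=.
rewrite coef_deriv prednK; last by case: (size M) h => [|[|]].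
move/eqP; rewrite -mulr_natr mulf_eq0 natA0 -lead_coefE lead_coef_eq0 (negbTE nz) /=.
by case: (size M) h => [|[|]].
Qed.

Lemma key_lc (f : {rmorphism {poly {poly R}} -> {poly R}}) (M : {poly {poly {poly R}}}) :
  (1 < size M)%N -> f (resultant M M^`()) != 0 -> f (lead_coef M) != 0.
Proof.
move=> sM; apply: contraNneq => flc0.
have hc : forall m, ((size M).-1 <= m)%N -> f M`_m = 0.
  move=> m; rewrite leq_eqVlt => /orP[/eqP <-|hm]; first by rewrite -lead_coefE.
  by rewrite nth_default ?rmorph0 //; case: (size M) hm sM => [|k] //=.
rewrite /resultant -det_map_mx.
have dS_gt0 : (0 < (size M^`()).-1 + (size M).-1)%N.
  by rewrite size_derivA; lia.
have jlt : (((size M^`()).-1 + (size M).-1).-1 < (size M^`()).-1 + (size M).-1)%N by rewrite ltn_predL.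
rewrite (expand_det_col _ (Ordinal jlt)) big1 // => i _.
rewrite mxE Sylvester_mxE /=.
have sD := size_derivA M.
case: split => k /=; rewrite ?rmorphMn ?coef_deriv ?rmorphMn hc ?mul0rn ?mul0r //.
  by have := ltn_ord k; move: (nat_of_ord k) => kk; rewrite sD -!subn1; lia.
by have := ltn_ord k; move: (nat_of_ord k) => kk; rewrite sD -!subn1; lia.
Qed.

Import Pdiv.Idomain.
Lemma key (f : {rmorphism {poly {poly R}} -> {poly R}}) (M : {poly {poly {poly R}}}) :
  (1 < size M)%N -> f (resultant M M^`()) != 0 ->
  f (resultant M M^`()) = resultant (map_poly f M) (map_poly f M)^`()
  /\ sqfree_x (map_poly f M).
Proof.
move=> sM nz.
have flc := key_lc f M sM nz.
have sD := size_derivA M.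
have flc' : f (lead_coef M^`()) != 0.
  rewrite lead_coefE coef_deriv sD prednK; last by rewrite -!subn1; lia.
  rewrite rmorphMn -lead_coefE -mulr_natr mulf_eq0 natB0 negb_or flc /=.
  by rewrite -lt0n -subn1 subn_gt0.
have Hi : f (resultant M M^`()) = resultant (map_poly f M) (map_poly f M)^`().
  by rewrite map_resultant // deriv_map.
split=> //.
move=> q r HP; rewrite leqNgt; apply/negP => sq.
move: nz; rewrite Hi => /negP; apply; rewrite resultant_eq0.
set P := map_poly f M in HP *.
have sP : size P = size M by rewrite size_map_poly_id0.
have qP : q %| P by rewrite HP -mulrA dvdp_mulIl.
have qP' : q %| P^`().
  have -> : P^`() = q * (q^`() * r *+ 2 + q * r^`()) by rewrite HP !derivM; ring.
  exact: dvdp_mulIl.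
have qg : q %| gcdp P P^`() by rewrite dvdp_gcd qP qP'.
have gnz : gcdp P P^`() != 0.
  rewrite gcdp_eq0 negb_and -size_poly_eq0 sP orbC.
  by apply/orP; right; rewrite -lt0n; exact: ltn_trans _ sM.
exact: leq_trans sq (dvdp_leq gnz qg).
Qed.
End Aux.

Theorem lemma11 (R : realType)
  (F : {poly {poly {poly {poly R}}}})   (* F(y, x, t, s), outer variable y *)
  (M : {poly {poly {poly R}}})          (* M(x, t, s), outer variable x *)
  (RR : {poly {poly R}})                (* R(t, s), outer variable t *)
  (HFsq : sqfree F)
  (HFts : forall c : {poly {poly R}}, mdvd (c%:P%:P) F -> c \is a GRing.unit)
  (HFlc : (size (lead_coef F) <= 1)%N)
  (HM : if (size F <= 1)%N then M = 0 else sqpart (Dres F) M)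
  (HR : RR = if (size M <= 1)%N then 0 else Dres M)
  (HR0 : RR != 0) :
  (forall t0 : R, ~ mdvd ('X - (t0%:P)%:P) RR ->
     spec_t t0 (resultant M M^`()) = resultant (spec_t3 t0 M) (spec_t3 t0 M)^`()
     /\ sqfree_x (spec_t3 t0 M))
  /\
  (forall s0 : R, ~ mdvd (('X - s0%:P)%:P) RR ->
     spec_s s0 (resultant M M^`()) = resultant (spec_s3 s0 M) (spec_s3 s0 M)^`()
     /\ sqfree_x (spec_s3 s0 M)).
Proof.
have sM : (1 < size M)%N.
  by move: HR HR0; case: ifP => [_ ->|/negbT]; rewrite ?eqxx // -ltnNge.
have HRM : RR = resultant M M^`() by rewrite HR ifF //; apply/negbTE; rewrite -ltnNge.
split.
  move=> t0 Hnd.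
  have nz : horner_eval (t0%:P) (resultant M M^`()) != 0.
    apply/negP => /eqP h; apply: Hnd.
    have : root RR (t0%:P) by rewrite /root HRM -horner_evalE h.
    move/factor_theorem => [q ->]; exists q; exact: mulrC.
  have := key _ _ _ sM nz.
  have Eg : (fun c : {poly {poly R}} => c.[t0%:P]) =1 horner_eval (t0%:P) by [].
  by rewrite /spec_t3 (eq_map_poly Eg).
move=> s0 Hnd.
pose g := map_poly (horner_eval s0) : {poly {poly R}} -> {poly R}.
have nz : g (resultant M M^`()) != 0.
  apply/negP => /eqP h; apply: Hnd; rewrite HRM.
  exists (map_poly (fun c => c %/ ('X - s0%:P)) (resultant M M^`())).
  apply/polyP => i; rewrite coefCM coef_map_id0 ?div0p //.
  rewrite mulrC divpK //; rewrite -root_factor_theorem /root.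
  by move/polyP: h => /(_ i); rewrite coef_map coef0 /= horner_evalE => ->.
have := key _ _ _ sM nz.
have Eg : spec_s s0 =1 g by [].
by rewrite /spec_s3 (eq_map_poly Eg).
Qed.
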